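(* Let $n\ge 1$, $h=1/(2n)$. Consider a fine grid on $\Omega^f=[0,1]\times[0,1]$ with points $(x^f_i,y^f_j)=((i-1)h,(j-1)h)$, $i=1,\dots,2n$ (periodic in $x$), where the row $j=1$ lies on the interface $\Gamma=\{y=0\}$ and $j=0$ is a row of ghost points; and a coarse grid on $\Omega^c=[0,1]\times[-1,0]$ with points $(x^c_i,y^c_j)=(2(i-1)h,2(j-n)h)$, $i=1,\dots,n$ (periodic in $x$), where the row $j=n$ lies on $\Gamma$ and $j=n+1$ is a row of ghost points. Let $(\cdot,\cdot)_h$ and $(\cdot,\cdot)_{2h}$ be the weighted inner products for grid functions (without ghost points) on the fine and coarse grids, $(\boldsymbol u,\boldsymbol v)_h=h^2\sum_{i}\sum_{j} w^f_j u_{ij}v_{ij}$, $(\boldsymbol u,\boldsymbol v)_{2h}=(2h)^2\sum_i\sum_j w^c_j u_{ij}v_{ij}$ with weights $w^f_j,w^c_j>0$, and let the interface inner products be $\langle \boldsymbol u_\Gamma,\boldsymbol v_\Gamma\rangle_h=h\sum_{i=1}^{2n}u_iv_i$ on the fine interface and $\langle \boldsymbol u_\Gamma,\boldsymbol v_\Gamma\rangle_{2h}=2h\sum_{i=1}^{n}u_iv_i$ on the coarse interface. For a grid function $\boldsymbol u$, $\boldsymbol u_\Gamma$ denotes its restriction to the interface row. Assume linear difference operators $\widetilde G_f(\mu)$ (acting on fine grid functions $\widetilde{\boldsymbol v}$ including ghost points, with values at the non-ghost fine grid points) and $\widetilde G_c(\mu)$ (analogously on the coarse grid), and linear maps $\widetilde{\boldsymbol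 v}\mapsto \widetilde{\boldsymbol v}'_\Gamma$ producing interface grid functions (of length $2n$ on the fine side and $n$ on the coarse side), satisfying the summation-by-parts identities $(\boldsymbol u,\widetilde G_f(\mu)\widetilde{\boldsymbol v})_h=-S_f(\boldsymbol u,\boldsymbol v)-\langle \boldsymbol u_\Gamma,\widetilde{\boldsymbol v}'_\Gamma\rangle_h$ for all fine grid functions $\boldsymbol u$ and $\widetilde{\boldsymbol v}$ (with $\boldsymbol v$ the restriction of $\widetilde{\boldsymbol v}$ to non-ghost points), and $(\boldsymbol u,\widetilde G_c(\mu)\widetilde{\boldsymbol v})_{2h}=-S_c(\boldsymbol u,\boldsymbol v)+\langle \boldsymbol u_\Gamma,\widetilde{\boldsymbol v}'_\Gamma\rangle_{2h}$ for all coarse grid functions, where $S_f$ and $S_c$ are symmetric positive semi-definite bilinear forms. Let $\boldsymbol{\rho}^f,\boldsymbol{\rho}^c$ be diagonal matrices with positive diagonal entries, let $\mathcal P$ be a linear (interpolation) map from coarse interface grid functions ($\mathbb R^n$) to fine interface grid functions ($\mathbb R^{2n}$), and $\mathcal R$ a linear (restriction) map from $\mathbb R^{2n}$ to $\mathbb R^n$. Consider smooth time-dependent grid functions $\widetilde{\boldsymbol f}(t)$, $\widetilde{\boldsymbol c}(t)$ satisfying the semi-discretization $\boldsymbol{\rho}^f\boldsymbol f_{tt}=\widetilde G_f(\mu)\widetilde{\boldsymbol f}$, $\boldsymbol{\rho}^c\boldsymbol c_{tt}=\widetilde G_c(\mu)\widetilde{\boldsymbol c}$, together with the interface conditions $\boldsymbol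 f_\Gamma=\mathcal P\boldsymbol c_\Gamma$ and $\widetilde{\boldsymbol c}'_\Gamma=\mathcal R\widetilde{\boldsymbol f}'_\Gamma$ for all $t$. If the interpolation and restriction operators are compatible in the sense $\mathcal P=2\mathcal R^T$ (as matrices), then $\frac{d}{dt}\left[(\boldsymbol f_t,\boldsymbol{\rho}^f\boldsymbol f_t)_h+S_f(\boldsymbol f,\boldsymbol f)+(\boldsymbol c_t,\boldsymbol{\rho}^c\boldsymbol c_t)_{2h}+S_c(\boldsymbol c,\boldsymbol c)\right]=0.$
   Context: This is a semi-discretization of the acoustic wave equation $\rho F_{tt}=\nabla\cdot(\mu\nabla F)$ on a fine domain and $\rho C_{tt}=\nabla\cdot(\mu\nabla C)$ on a coarse domain, coupled by continuity of the solution and of the normal flux $\mu\,\partial_y$ across the interface $y=0$, with a 1:2 mesh refinement and periodic boundary conditions in $x$; contributions from the outer boundaries ($y=1$, $y=-1$) are not included, as encoded in the assumed summation-by-parts identities. Tilde denotes grid functions/operators that involve ghost points; $\boldsymbol f,\boldsymbol c$ denote the restrictions of $\widetilde{\boldsymbol f},\widetilde{\boldsymbol c}$ to the non-ghost grid points. In the paper, $\widetilde{\boldsymbol v}'_\Gamma$ has $i$-th entry $\mu_{i,1}\widetilde{\boldsymbol b}_1^T\widetilde{\boldsymbol v}_{i,:}$, a boundary difference approximation of $\mu\,\partial v/\partial y$ at the interface using the ghost point. *)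

(* Defs.v *)
From HB Require Import structures.
From mathcomp Require Import all_boot all_order all_algebra.
From mathcomp Require Import all_classical all_reals all_analysis.
Set Implicit Arguments. Unset Strict Implicit. Unset Printing Implicit Defensive.
Import Order.TTheory GRing.Theory Num.Theory.
Import numFieldNormedType.Exports.
Local Open Scope ring_scope.

(* Grid functions are matrices indexed (x-index i, y-index j).
   Fine grid, x-index i : 'I_(2n) (i=1..2n in the paper, periodic).
   - fine with ghost row:   'M_(2n, 2n+2), column k <-> paper row j = k
       (column 0 = ghost row j = 0, column 1 = interface row j = 1)
   - fine non-ghost:        'M_(2n, 2n+1), column k <-> paper row j = k+1
       (column 0 = interface row j = 1)
   Coarse grid, x-index i : 'I_n.
   - coarse with ghost row: 'M_(n, n+2), column k <-> paper row j = k
       (column n = interface row, column n+1 = ghost row)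
   - coarse non-ghost:      'M_(n, n+1), column k <-> paper row j = k
       (column n = interface row) *)

Section Grid.
Variable R : realType.
Variable n : nat.

Definition fineT := 'M[R]_(2 * n, (2 * n).+2).
Definition fineG := 'M[R]_(2 * n, (2 * n).+1).
Definition coarseT := 'M[R]_(n, n.+2).
Definition coarseG := 'M[R]_(n, n.+1).

Definition resf (v : fineT) : fineG := \matrix_(i, k) v i (lift ord0 k).
Definition resc (v : coarseT) : coarseG :=
  \matrix_(i, k) v i (widen_ord (leqnSn _) k).

Definition gammaf (u : fineG) : 'cV[R]_(2 * n) := \col_i u i ord0.
Definition gammac (u : coarseG) : 'cV[R]_n := \col_i u i ord_max.

Definition hh : R := ((2 * n)%:R)^-1.

Definition ipf (wf : 'I_(2 * n).+1 -> R) (u v : fineG) : R :=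
  hh ^+ 2 * \sum_i \sum_j wf j * u i j * v i j.
Definition ipc (wc : 'I_n.+1 -> R) (u v : coarseG) : R :=
  (2 * hh) ^+ 2 * \sum_i \sum_j wc j * u i j * v i j.

Definition ipGf (u v : 'cV[R]_(2 * n)) : R := hh * \sum_i u i 0 * v i 0.
Definition ipGc (u v : 'cV[R]_n) : R := (2 * hh) * \sum_i u i 0 * v i 0.

End Grid.

(* action of a diagonal matrix, given by its diagonal d (a grid function) *)
Definition diagact (R : realType) p q (d u : 'M[R]_(p, q)) : 'M[R]_(p, q) :=
  \matrix_(i, j) (d i j * u i j).

Definition dmx (R : realType) p q (F : R -> 'M[R]_(p, q)) (t : R) : 'M[R]_(p, q) :=
  \matrix_(i, j) derive1 (fun s => F s i j) t.

Definition sym_psd_bilinear (R : realType) (V : lmodType R) (S : V -> V -> R) :=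
  [/\ forall (a : R) (u v w : V), S (a *: u + v) w = a * S u w + S v w,
      forall u v, S u v = S v u
    & forall u, 0 <= S u u].

Definition twice_diff (R : realType) p q (F : R -> 'M[R]_(p, q)) :=
  forall (i : 'I_p) (j : 'I_q) (t : R),
    derivable (fun s => F s i j) t 1 /\
    derivable (fun s => derive1 (fun s => F s i j) s) t 1.

(* Main.v *)
Require Import Defs.
From HB Require Import structures.
From mathcomp Require Import all_boot all_order all_algebra.
From mathcomp Require Import all_classical all_reals all_analysis.
From mathcomp Require Import ring lra.
Import Order.TTheory GRing.Theory Num.Theory.
Import numFieldNormedType.Exports.
Local Open Scope ring_scope.

Section Helpers.
Variable R : realType.

Lemma is_derive_sumf n (h : 'I_n -> R -> R) (x : R) dh :
  (forall i, is_derive x 1 (h i) (dh i)) ->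
  is_derive x 1 (fun s => \sum_i h i s) (\sum_i dh i).
Proof.
move=> H.
have -> : (fun s => \sum_i h i s) = \sum_i h i.
  by apply/funext => s; rewrite fct_sumE.
exact: is_derive_sum.
Qed.

Lemma is_derive_mulf (f g : R -> R) (x df dg : R) :
  is_derive x 1 f df -> is_derive x 1 g dg ->
  is_derive x 1 (fun s => f s * g s) (df * g x + f x * dg).
Proof.
move=> Hf Hg.
have -> : (fun s => f s * g s) = f * g by apply/funext.
apply: (is_derive_eq (is_deriveM Hf Hg)).
rewrite /GRing.scale /=; ring.
Qed.

Lemma is_derive_addf (f g : R -> R) (x df dg : R) :
  is_derive x 1 f df -> is_derive x 1 g dg ->
  is_derive x 1 (fun s => f s + g s) (df + dg).
Proof.
move=> Hf Hg.
have -> : (fun s => f s + g s) = f + g by apply/funext.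
exact: is_deriveD.
Qed.

Lemma is_derive_cstf (k x : R) : is_derive x 1 (fun _ : R => k) 0.
Proof. exact: (is_derive_cst k). Qed.

End Helpers.

Section Bil.
Variables (R : realType) (p q p' q' : nat).
Variable B : 'M[R]_(p, q) -> 'M[R]_(p', q') -> R.
Hypothesis Bl : forall a u v w, B (a *: u + v) w = a * B u w + B v w.
Hypothesis Br : forall a u v w, B u (a *: v + w) = a * B u v + B u w.

Lemma B0l w : B 0 w = 0.
Proof. have := Bl 1 0 0 w; rewrite scaler0 addr0 mul1r; lra. Qed.
Lemma B0r w : B w 0 = 0.
Proof. have := Br 1 w 0 0; rewrite scaler0 addr0 mul1r; lra. Qed.

Lemma Bsuml I (r : seq I) (P : pred I) F w :
  B (\sum_(i <- r | P i) F i) w = \sum_(i <- r | P i) B (F i) w.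
Proof.
symmetry; apply: (big_ind2 (fun a b => a = B b w)).
- by rewrite B0l.
- by move=> x1 x2 y1 y2 -> ->; have := Bl 1 x2 y2 w; rewrite scale1r mul1r.
- by [].
Qed.

Lemma Bsumr I (r : seq I) (P : pred I) F w :
  B w (\sum_(i <- r | P i) F i) = \sum_(i <- r | P i) B w (F i).
Proof.
symmetry; apply: (big_ind2 (fun a b => a = B w b)).
- by rewrite B0r.
- by move=> x1 x2 y1 y2 -> ->; have := Br 1 w x2 y2; rewrite scale1r mul1r.
- by [].
Qed.

Lemma Bscalel a u w : B (a *: u) w = a * B u w.
Proof. by have := Bl a u 0 w; rewrite addr0 B0l addr0. Qed.
Lemma Bscaler a u w : B w (a *: u) = a * B w u.
Proof. by have := Br a w u 0; rewrite addr0 B0r addr0. Qed.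

Lemma Bexp u v : B u v = \sum_i \sum_j \sum_k \sum_l
  (u i j * v k l * B (delta_mx i j) (delta_mx k l)).
Proof.
rewrite {1}(matrix_sum_delta u) {1}(matrix_sum_delta v) Bsuml.
apply: eq_bigr => i _; rewrite Bsuml; apply: eq_bigr => j _.
rewrite Bscalel Bsumr mulr_sumr; apply: eq_bigr => k _.
rewrite Bsumr mulr_sumr; apply: eq_bigr => l _.
rewrite Bscaler; ring.
Qed.

Lemma Bderiv (M : R -> 'M[R]_(p, q)) (N : R -> 'M[R]_(p', q')) (t : R) (M' : 'M[R]_(p, q)) (N' : 'M[R]_(p', q')) :
  (forall i j, is_derive t 1 (fun s => M s i j) (M' i j)) ->
  (forall i j, is_derive t 1 (fun s => N s i j) (N' i j)) ->
  is_derive t 1 (fun s => B (M s) (N s)) (B M' (N t) + B (M t) N').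
Proof.
move=> HM HN.
have -> : (fun s => B (M s) (N s)) = (fun s => \sum_i \sum_j \sum_k \sum_l
  (M s i j * N s k l * B (delta_mx i j) (delta_mx k l))).
  by apply/funext => s; rewrite Bexp.
have -> : B M' (N t) + B (M t) N' = \sum_i \sum_j \sum_k \sum_l
  ((M' i j * N t k l + M t i j * N' k l) * B (delta_mx i j) (delta_mx k l)).
  rewrite [B M' _]Bexp [B (M t) _]Bexp -big_split; apply: eq_bigr => i _.
  rewrite -big_split; apply: eq_bigr => j _.
  rewrite -big_split; apply: eq_bigr => k _.
  rewrite -big_split; apply: eq_bigr => l _.
  by rewrite mulrDl.
apply: is_derive_sumf => i; apply: is_derive_sumf => j.
apply: is_derive_sumf => k; apply: is_derive_sumf => l.
have := @is_derive_mulf R (fun s => M s i j * N s k l)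
    (fun _ => B (delta_mx i j) (delta_mx k l)) t _ 0
    (@is_derive_mulf R (fun s => M s i j) (fun s => N s k l) t _ _ (HM i j) (HN k l))
    (is_derive_cstf _ _ t).
by rewrite mulr0 addr0.
Qed.

End Bil.

Theorem mainTheorem1 (R : realType) (n : nat) (n_gt0 : (0 < n)%N)
  (wf : 'I_(2 * n).+1 -> R) (wc : 'I_n.+1 -> R)
  (wf_pos : forall j, 0 < wf j) (wc_pos : forall j, 0 < wc j)
  (Gf : {linear fineT R n -> fineG R n})
  (Gc : {linear coarseT R n -> coarseG R n})
  (dGf : {linear fineT R n -> 'cV[R]_(2 * n)})
  (dGc : {linear coarseT R n -> 'cV[R]_n})
  (Sf : fineG R n -> fineG R n -> R) (Sc : coarseG R n -> coarseG R n -> R)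
  (Sf_ok : sym_psd_bilinear Sf) (Sc_ok : sym_psd_bilinear Sc)
  (SBPf : forall (u : fineG R n) (vt : fineT R n),
     ipf wf u (Gf vt) = - Sf u (resf vt) - ipGf (gammaf u) (dGf vt))
  (SBPc : forall (u : coarseG R n) (vt : coarseT R n),
     ipc wc u (Gc vt) = - Sc u (resc vt) + ipGc (gammac u) (dGc vt))
  (rhof : fineG R n) (rhoc : coarseG R n)
  (rhof_pos : forall i j, 0 < rhof i j) (rhoc_pos : forall i j, 0 < rhoc i j)
  (P : 'M[R]_(2 * n, n)) (Rm : 'M[R]_(n, 2 * n))
  (ft : R -> fineT R n) (ct : R -> coarseT R n)
  (ft_smooth : twice_diff ft) (ct_smooth : twice_diff ct)
  (eqf : forall t, diagact rhof (dmx (dmx (fun s => resf (ft s))) t) = Gf (ft t))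
  (eqc : forall t, diagact rhoc (dmx (dmx (fun s => resc (ct s))) t) = Gc (ct t))
  (ifc1 : forall t, gammaf (resf (ft t)) = P *m gammac (resc (ct t)))
  (ifc2 : forall t, dGc (ct t) = Rm *m dGf (ft t))
  (compat : P = 2 *: Rm^T) :
  let f := fun s => resf (ft s) in
  let c := fun s => resc (ct s) in
  let E := fun s =>
    ipf wf (dmx f s) (diagact rhof (dmx f s)) + Sf (f s) (f s)
    + ipc wc (dmx c s) (diagact rhoc (dmx c s)) + Sc (c s) (c s) in
  forall t : R, derivable E t 1 /\ derive1 E t = 0.

Proof.
move=> f c E t.
case: Sf_ok => Sfl Sfs _; case: Sc_ok => Scl Scs _.
have Sfr : forall a u v w, Sf u (a *: v + w) = a * Sf u v + Sf u w.
  by move=> a u v w; rewrite Sfs Sfl !(Sfs u).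
have Scr : forall a u v w, Sc u (a *: v + w) = a * Sc u v + Sc u w.
  by move=> a u v w; rewrite Scs Scl !(Scs u).
pose B1 (u v : fineG R n) := ipf wf u (diagact rhof v).
pose B2 (u v : coarseG R n) := ipc wc u (diagact rhoc v).
have B1l : forall a u v w, B1 (a *: u + v) w = a * B1 u w + B1 v w.
  move=> a u v w; rewrite /B1 /ipf !mulr_sumr -big_split; apply: eq_bigr => i _.
  rewrite !mulr_sumr -big_split; apply: eq_bigr => j _.
  rewrite /diagact !mxE /=; ring.
have B1s : forall u v, B1 u v = B1 v u.
  move=> u v; rewrite /B1 /ipf; congr (_ * _); apply: eq_bigr => i _.
  apply: eq_bigr => j _; rewrite /diagact !mxE; ring.
have B1r : forall a u v w, B1 u (a *: v + w) = a * B1 u v + B1 u w.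
  by move=> a u v w; rewrite B1s B1l !(B1s u).
have B2l : forall a u v w, B2 (a *: u + v) w = a * B2 u w + B2 v w.
  move=> a u v w; rewrite /B2 /ipc !mulr_sumr -big_split; apply: eq_bigr => i _.
  rewrite !mulr_sumr -big_split; apply: eq_bigr => j _.
  rewrite /diagact !mxE /=; ring.
have B2s : forall u v, B2 u v = B2 v u.
  move=> u v; rewrite /B2 /ipc; congr (_ * _); apply: eq_bigr => i _.
  apply: eq_bigr => j _; rewrite /diagact !mxE; ring.
have B2r : forall a u v w, B2 u (a *: v + w) = a * B2 u v + B2 u w.
  by move=> a u v w; rewrite B2s B2l !(B2s u).
have Hf1 : forall i j, is_derive t 1 (fun s => f s i j) (dmx f t i j).
  move=> i j.
  have e : (fun s => f s i j) = (fun s => ft s i (lift ord0 j)).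
    by apply/funext => s; rewrite /f /resf mxE.
  rewrite mxE e derive1E; apply: derivableP.
  by have [] := ft_smooth i (lift ord0 j) t.
have Hf2 : forall i j, is_derive t 1 (fun s => dmx f s i j) (dmx (dmx f) t i j).
  move=> i j.
  have e : (fun s => dmx f s i j) =
      (fun s => derive1 (fun s => ft s i (lift ord0 j)) s).
    apply/funext => s; rewrite mxE; congr derive1.
    by apply/funext => r; rewrite /f /resf mxE.
  rewrite mxE e derive1E; apply: derivableP.
  by have [] := ft_smooth i (lift ord0 j) t.
have Hc1 : forall i j, is_derive t 1 (fun s => c s i j) (dmx c t i j).
  move=> i j.
  have e : (fun s => c s i j) = (fun s => ct s i (widen_ord (leqnSn _) j)).
    by apply/funext => s; rewrite /c /resc mxE.
  rewrite mxE e derive1E; apply: derivableP.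
  by have [] := ct_smooth i (widen_ord (leqnSn _) j) t.
have Hc2 : forall i j, is_derive t 1 (fun s => dmx c s i j) (dmx (dmx c) t i j).
  move=> i j.
  have e : (fun s => dmx c s i j) =
      (fun s => derive1 (fun s => ct s i (widen_ord (leqnSn _) j)) s).
    apply/funext => s; rewrite mxE; congr derive1.
    by apply/funext => r; rewrite /c /resc mxE.
  rewrite mxE e derive1E; apply: derivableP.
  by have [] := ct_smooth i (widen_ord (leqnSn _) j) t.
pose D := (B1 (dmx (dmx f) t) (dmx f t) + B1 (dmx f t) (dmx (dmx f) t))
  + (Sf (dmx f t) (f t) + Sf (f t) (dmx f t))
  + (B2 (dmx (dmx c) t) (dmx c t) + B2 (dmx c t) (dmx (dmx c) t))
  + (Sc (dmx c t) (c t) + Sc (c t) (dmx c t)).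
have HE : is_derive t 1 E D.
  apply: is_derive_addf; first apply: is_derive_addf; first apply: is_derive_addf.
  - exact: (@Bderiv _ _ _ _ _ B1 B1l B1r _ _ _ _ _ Hf2 Hf2).
  - exact: (@Bderiv _ _ _ _ _ Sf Sfl Sfr _ _ _ _ _ Hf1 Hf1).
  - exact: (@Bderiv _ _ _ _ _ B2 B2l B2r _ _ _ _ _ Hc2 Hc2).
  - exact: (@Bderiv _ _ _ _ _ Sc Scl Scr _ _ _ _ _ Hc1 Hc1).
suff D0 : D = 0.
  split; first exact: ex_derive.
  by rewrite derive1E derive_val.
have Ef : B1 (dmx f t) (dmx (dmx f) t) =
    - Sf (dmx f t) (f t) - ipGf (gammaf (dmx f t)) (dGf (ft t)).
  by rewrite /B1 eqf SBPf.
have Ec : B2 (dmx c t) (dmx (dmx c) t) =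
    - Sc (dmx c t) (c t) + ipGc (gammac (dmx c t)) (dGc (ct t)).
  by rewrite /B2 eqc SBPc.
have Gam : gammaf (dmx f t) = P *m gammac (dmx c t).
  apply/matrixP => i j; rewrite (ord1 j).
  have e1 : forall s, f s i ord0 = \sum_k P i k * c s k ord_max.
    move=> s; have := congr1 (fun M : 'cV_(2*n) => M i ord0) (ifc1 s).
    by rewrite /= !mxE => ->; apply: eq_bigr => k _; rewrite !mxE.
  have e : (fun s => f s i ord0) = (fun s => \sum_k P i k * c s k ord_max).
    by apply/funext => s; exact: e1.
  have HD : is_derive t 1 (fun s => \sum_k P i k * c s k ord_max)
      (\sum_k (0 * c t k ord_max + P i k * dmx c t k ord_max)).
    apply: is_derive_sumf => k.
    exact: (@is_derive_mulf R (fun _ => P i k) (fun s => c s k ord_max) t _ _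
      (is_derive_cstf _ _ t) (Hc1 k ord_max)).
  rewrite !mxE e derive1E (@derive_val _ _ _ _ _ _ _ HD).
  by apply: eq_bigr => k _; rewrite !mxE mul0r add0r.
have Key : forall (g : 'cV[R]_n) (d : 'cV[R]_(2 * n)),
    ipGf (2 *: Rm^T *m g) d = ipGc g (Rm *m d).
  move=> g d; rewrite /ipGf /ipGc.
  have -> : \sum_i (2 *: Rm^T *m g) i 0 * d i 0
      = \sum_i \sum_k 2 * (g k 0 * (Rm k i * d i 0)).
    apply: eq_bigr => i _; rewrite !mxE big_distrl; apply: eq_bigr => k _.
    rewrite !mxE /=; ring.
  have -> : \sum_k g k 0 * (Rm *m d) k 0 = \sum_k \sum_i g k 0 * (Rm k i * d i 0).
    by apply: eq_bigr => k _; rewrite !mxE big_distrr.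
  rewrite exchange_big /=.
  have -> : \sum_k \sum_i 2 * (g k 0 * (Rm k i * d i 0))
      = 2 * \sum_k \sum_i g k 0 * (Rm k i * d i 0).
    by rewrite mulr_sumr; apply: eq_bigr => k _; rewrite mulr_sumr.
  ring.
rewrite /D (B1s (dmx (dmx f) t)) (Sfs (f t)) (B2s (dmx (dmx c) t)) (Scs (c t)).
rewrite Ef Ec Gam ifc2 compat Key.
ring.
Qed.
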